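(* Let $G_1=(V_1,E_1)$ and $G_2=(V_2,E_2)$ be finite simple directed graphs and let $G=(V,E)$ be their product: $V=V_1\times V_2$, and $((v,u),(v',u'))\in E$ iff $(v,v')\in E_1$ and $(u,u')\in E_2$. For $e'=((v,u),(v',u'))\in E$ write $e'_1=(v,v')$. Let $P=(\pi,Q)$ be a stationary Markov chain on $G$ and $P_1=(\pi_1,Q_1)$ a stationary Markov chain on $G_1$. Suppose that (i) for all $e\in E_1$, $P_1(e)=\sum_{e'\in E,\ e'_1=e}P(e')$; and (ii) for all $u_0\in V_2$ and $v_0,v_1\in V_1$, $\sum_{u_1\in V_2}Q\big((v_1,u_1)\mid(v_0,u_0)\big)=Q_1(v_1\mid v_0)$. Then the $G_1$-marginal of the Markov process $\hat P$ equals the Markov process $\hat P_1$.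
   Context: A stationary Markov chain on a finite directed graph $H=(W,F)$ is a probability measure $P$ on $F$ such that for every vertex $w$, $\pi(w):=\sum_{e:\sigma(e)=w}P(e)=\sum_{e:\tau(e)=w}P(e)$, with $\pi(w)>0$ for all $w$ (no degenerate vertices); here $\sigma(e),\tau(e)$ are the source and target of $e$. The transition probabilities are $Q(e)=P(e)/\pi(\sigma(e))$; for a simple graph and $e=(w,w')$ one writes $Q(w'\mid w)=Q(e)$, and $Q(w'\mid w)=0$ if $(w,w')\notin F$. The pair is denoted $P=(\pi,Q)$. The induced stationary Markov process $\hat P$ is the probability measure on the space of bi-infinite paths $(e_i)_{i\in\mathbb{Z}}$ in $H$ (with $\tau(e_i)=\sigma(e_{i+1})$) determined by $\hat P(\{(e_i): e_0\cdots e_{n-1}=f_0\cdots f_{n-1}\})=P(f_0)\prod_{i=1}^{n-1}Q(f_i)$ for every finite path $f_0\cdots f_{n-1}$. The $G_1$-marginal of $\hat P$ is its pushforward under the map sending a bi-infinite path $(((v_i,u_i),(v_{i+1},u_{i+1})))_i$ in $G$ to the path $((v_i,v_{i+1}))_i$ in $G_1$. *)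

(* Defs.v *)
From HB Require Import structures.
From mathcomp Require Import all_boot all_order all_algebra.
From mathcomp Require Import all_classical all_reals all_analysis.
Unset Printing Implicit Defensive.
Import Order.TTheory GRing.Theory Num.Theory.
Local Open Scope classical_set_scope.
Local Open Scope ring_scope.

(* A finite simple directed graph is (V, E) with V : finType, E : rel V.
   A probability measure on the edge set is a function P : V -> V -> R
   supported on E. *)

Section MC.
Variables (R : realType) (V : finType).

Definition mc_pi (P : V -> V -> R) (w : V) : R := \sum_(w' : V) P w w'.

Definition mc_Q (P : V -> V -> R) (w w' : V) : R := P w w' / mc_pi P w.

Definition is_stationary_mc (E : rel V) (P : V -> V -> R) : Prop :=
  [/\ (forall w w', 0 <= P w w'),
      (forall w w', ~~ E w w' -> P w w' = 0),
      \sum_(w : V) \sum_(w' : V) P w w' = 1,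
      (forall w, \sum_(w' : V) P w w' = \sum_(w' : V) P w' w)
    & (forall w, 0 < mc_pi P w)].
End MC.

Definition prod_rel (V1 V2 : finType) (E1 : rel V1) (E2 : rel V2) :
  rel (V1 * V2)%type := fun x y => E1 x.1 y.1 && E2 x.2 y.2.

(* A bi-infinite path (e_i)_i in a simple graph is the same as a bi-infinite
   sequence of vertices (x_i)_i with e_i = (x_i, x_{i+1}).  We take as sample
   space all maps int -> V, with the product sigma-algebra (generated by the
   coordinate events [x k = a]); the point v0 is only needed because
   MathComp-Analysis measurable types must be pointed. *)
Definition omega (V : Type) (v0 : V) := int -> V.
HB.instance Definition _ (V : Type) (v0 : V) := gen_eqMixin (@omega V v0).
HB.instance Definition _ (V : Type) (v0 : V) := gen_choiceMixin (@omega V v0).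
HB.instance Definition _ (V : Type) (v0 : V) :=
  isPointed.Build (@omega V v0) (fun _ => v0).

Definition coord_events (V : Type) (v0 : V) : set (set (@omega V v0)) :=
  [set A | exists (k : int) (a : V), A = [set x | x k = a]].

Definition pathsp (V : Type) (v0 : V) := g_sigma_algebraType (@coord_events V v0).

Definition cyl (V : Type) (v0 : V) (k : int) (m : nat) (w : nat -> V)
  : set (@pathsp V v0) :=
  [set x | forall i : nat, (i <= m)%N -> x (k + i%:Z) = w i].

(* mu is the stationary Markov process induced by the chain P on (V,E):
   for every finite path f_0 ... f_n (n+1 edges, i.e. vertices w 0 .. w n.+1),
   at every position k, the cylinder probability is
   P(f_0) * prod_{i=1}^{n} Q(f_i). *)
Definition is_markov_process (R : realType) (V : finType) (v0 : V)
  (E : rel V) (P : V -> V -> R) (mu : probability (@pathsp V v0) R) : Prop :=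
  forall (k : int) (n : nat) (w : nat -> V),
    (forall i, (i <= n)%N -> E (w i) (w i.+1)) ->
    mu (@cyl V v0 k n.+1 w) =
      (P (w 0%N) (w 1%N) * \prod_(1 <= i < n.+1) @mc_Q R V P (w i) (w i.+1))%:E.

Definition marg1 (V1 V2 : Type) (a1 : V1) (a2 : V2)
  (x : @pathsp (V1 * V2)%type (a1, a2)) : @pathsp V1 a1 := fun i => (x i).1.

(* Main.v *)
Require Import Defs.
From HB Require Import structures.
From mathcomp Require Import all_boot all_order all_algebra.
From mathcomp Require Import all_classical all_reals all_analysis.
From mathcomp Require Import zify ring lra.
Import Order.TTheory GRing.Theory Num.Theory.
Local Open Scope classical_set_scope.
Local Open Scope ring_scope.




Section Split.
Context d (R : realType) (T : measurableType d) (B : finType).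
Variable rho : {measure set T -> \bar R}.

Lemma meas_split_seq (A : set T) (g : T -> B) (s : seq B) :
  uniq s -> (forall b, measurable (A `&` g @^-1` [set b])) ->
  rho (A `&` [set x | g x \in s]) = (\sum_(b <- s) rho (A `&` g @^-1` [set b]))%E.
Proof.
move=> us mA; elim: s us => [|b s IH] /=.
  move=> _; rewrite big_nil.
  suff -> : A `&` [set x | g x \in [::]] = set0 by rewrite measure0.
  by apply/seteqP; split => x //= [].
move=> /andP[bs us]; rewrite big_cons -IH //.
have mS : forall s' : seq B, measurable (A `&` [set x | g x \in s']).
  elim=> [|c s' IHs].
    suff -> : A `&` [set x | g x \in [::]] = set0 by [].
    by apply/seteqP; split => x //= [].
  suff -> : A `&` [set x | g x \in c :: s'] =
     (A `&` g @^-1` [set c]) `|` (A `&` [set x | g x \in s']) by apply: measurableU.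
  apply/seteqP; split => x /=.
    by case=> Ax; rewrite inE => /orP[/eqP ->|]; [left|right].
  by case=> -[Ax H]; split=> //; rewrite inE ?H ?eqxx // orbC /= ?H //; rewrite H.
rewrite -measureU //.
  congr (rho _); apply/seteqP; split => x /=.
    by case=> Ax; rewrite inE => /orP[/eqP ->|]; [left|right].
  by case=> -[Ax H]; split=> //; rewrite inE ?H ?eqxx // orbC /= ?H //; rewrite H.
apply/seteqP; split => x //= [[_ ->]] [_]; by rewrite (negbTE bs).
Qed.

Lemma meas_split (A : set T) (g : T -> B) :
  (forall b, measurable (A `&` g @^-1` [set b])) ->
  rho A = (\sum_(b : B) rho (A `&` g @^-1` [set b]))%E.
Proof.
move=> mA; rewrite -meas_split_seq //; last exact: index_enum_uniq.
congr (rho _); apply/seteqP; split => x /=; last by case.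
by move=> Ax; split=> //; rewrite mem_index_enum.
Qed.
End Split.




Section Cyl.
Context {V : finType} {v0 : V}.
Local Notation T := (@pathsp V v0).

Definition Cs (k : int) (m : nat) (S : nat -> pred V) : set T :=
  [set x | forall i : nat, (i <= m)%N -> S i (x (k + i%:Z))].

Lemma coord_meas (j : int) (a : V) : measurable [set x : T | x j = a].
Proof. by apply: sub_sigma_algebra; exists j, a. Qed.

Lemma pred_meas (j : int) (S : pred V) : measurable [set x : T | S (x j)].
Proof.
suff -> : [set x : T | S (x j)] = \big[setU/set0]_(a <- index_enum V | S a) [set x : T | x j = a] :> set T.
  by apply: bigsetU_measurable => a _; apply: coord_meas.
rewrite -bigcup_seq_cond; apply/seteqP; split => x /=.
  by move=> Sx; exists (x j) => //=; rewrite mem_index_enum.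
by move=> -[a /= /andP[_ Sa] ->].
Qed.

Lemma Cs_meas k m S : measurable (Cs k m S).
Proof.
suff -> : Cs k m S = \big[setI/setT]_(i <- iota 0 m.+1) [set x : T | S i (x (k + i%:Z))].
  by apply: bigsetI_measurable => i _; apply: pred_meas.
rewrite -bigcap_seq; apply/seteqP; split => x /=.
  move=> H i; rewrite /= inE mem_iota => Hi; apply: H; move: Hi; case: i => //= i; lia.
by move=> H i lim; apply: H; rewrite /= inE mem_iota; case: i lim => //= i; lia.
Qed.

Lemma Cs_ext k m S S' : (forall i y, (i <= m)%N -> S i y = S' i y) -> Cs k m S = Cs k m S'.
Proof.
move=> h; apply/seteqP; split => x /= H i lim; [rewrite -h // | rewrite h //]; exact: H.
Qed.

Lemma Cs_cyl k m w : @cyl V v0 k m w = Cs k m (fun i => pred1 (w i)).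
Proof. by apply/seteqP; split => x /= H i /H /eqP. Qed.

Lemma Cs_split k m S r (B : finType) (g : V -> B) (b : B) : (r <= m)%N ->
  Cs k m S `&` (fun x : T => g (x (k + r%:Z))) @^-1` [set b] =
  Cs k m (fun i => if i == r then (fun y => S i y && (g y == b)) else S i).
Proof.
move=> rm; apply/seteqP; split => x /=.
  case=> H <- i lim; case: eqP => [->|_]; last exact: H.
  by rewrite /= H // eqxx.
move=> H; split.
  move=> i lim; have := H i lim; case: eqP => // -> /andP[] //.
by have := H r rm; rewrite eqxx /= => /andP[_ /eqP].
Qed.

Lemma Cs_split_meas k m S r (B : finType) (g : V -> B) (b : B) :
  measurable (Cs k m S `&` (fun x : T => g (x (k + r%:Z))) @^-1` [set b]).
Proof.
apply: measurableI; first exact: Cs_meas.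
have -> : (fun x : T => g (x (k + r%:Z))) @^-1` [set b] =
    [set x : T | (fun y => g y == b) (x (k + r%:Z))].
  by apply/seteqP; split => x /= /eqP.
exact: (pred_meas _ (fun y => g y == b)).
Qed.
End Cyl.

Section More.
Context {V : finType} {v0 : V}.
Local Notation T := (@pathsp V v0).
Lemma coord_pre_meas (j : int) (B : finType) (g : V -> B) (b : B) :
  measurable ((fun x : T => g (x j)) @^-1` [set b]).
Proof.
have -> : (fun x : T => g (x j)) @^-1` [set b] = [set x : T | (fun y => g y == b) (x j)].
  by apply/seteqP; split => x /= /eqP.
exact: (pred_meas _ (fun y => g y == b)).
Qed.
End More.



Section Uniq.
Variables (R : realType) (V : finType) (v0 : V).
Local Notation T := (@pathsp V v0).
Local Notation CS := (@Cs V v0).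

Lemma Cs_shift k m S d M : (d + m <= M)%N ->
  CS k m S = CS (k - d%:Z) M (fun i => if (d <= i <= d + m)%N then S (i - d)%N else predT).
Proof.
move=> dmM; apply/seteqP; split => x /= H i lim.
  case: ifP => // /andP[di idm].
  have -> : k - d%:Z + i%:Z = k + (i - d)%N%:Z by lia.
  apply: H; lia.
have := H (d + i)%N ltac:(lia).
have -> : (d <= d + i <= d + m)%N by lia.
have -> : (d + i - d = i)%N by lia.
by have -> : k - d%:Z + (d + i)%N%:Z = k + i%:Z by lia.
Qed.

Lemma Cs_I k m S S' : CS k m S `&` CS k m S' = CS k m (fun i y => S i y && S' i y).
Proof.
apply/seteqP; split => x /=; first by case=> H H' i lim; rewrite H ?H'.
by move=> H; split=> i lim; have /andP[] := H i lim.
Qed.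

Definition Rect : set (set T) := [set A | exists k n S, A = CS k n.+1 S].

Lemma Rect_setI : setI_closed Rect.
Proof.
move=> _ _ [k [n [S ->]]] [k' [n' [S' ->]]].
set K := k - (`|k - k'|%N)%:Z.
set d := `|k - K|%N; set d' := `|k' - K|%N.
exists K, (d + n + d' + n')%N.
rewrite (Cs_shift _ _ _ d (d + n + d' + n').+1); last by lia.
rewrite (Cs_shift k' _ _ d' (d + n + d' + n').+1); last by lia.
have -> : k - d%:Z = K by rewrite /d /K; lia.
have -> : k' - d'%:Z = K by rewrite /d' /K; lia.
by eexists; rewrite Cs_I.
Qed.

Variables (rho1 rho2 : {measure set T -> \bar R}).
Hypothesis fin1 : (rho1 setT < +oo)%E.
Hypothesis hcyl : forall k n w, rho1 (@cyl V v0 k n.+1 w) = rho2 (@cyl V v0 k n.+1 w).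

Lemma agree_rect k n S : rho1 (CS k n.+1 S) = rho2 (CS k n.+1 S).
Proof.
suff H : forall r w, rho1 (CS k n.+1 (fun i => if (i < r)%N then S i else pred1 (w i)))
                   = rho2 (CS k n.+1 (fun i => if (i < r)%N then S i else pred1 (w i))).
  have := H n.+2 (fun _ => v0).
  by rewrite (Cs_ext k n.+1 _ S) // => i y lim; rewrite ltnS lim.
elim=> [|r IH] w.
  by rewrite -(Cs_ext k n.+1 (fun i => pred1 (w i))) // -Cs_cyl hcyl.
have [rn|rn] := leqP r n.+1; last first.
  rewrite -(Cs_ext k n.+1 (fun i => if (i < r)%N then S i else pred1 (w i))); first exact: IH.
  move=> i y lim; have -> : (i < r)%N by lia.
  by have -> : (i < r.+1)%N by lia.
pose g := fun x : T => x (k + r%:Z).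
rewrite (meas_split _ _ _ _ rho1 _ g); last by move=> b; exact: (Cs_split_meas k n.+1 _ r _ id).
rewrite (meas_split _ _ _ _ rho2 _ g); last by move=> b; exact: (Cs_split_meas k n.+1 _ r _ id).
apply: eq_bigr => b _.
rewrite (Cs_split k n.+1 _ r _ id b rn).
case Srb: (S r b).
  pose w' := fun i => if i == r then b else w i.
  rewrite -(Cs_ext k n.+1 (fun i => if (i < r)%N then S i else pred1 (w' i))); first exact: IH.
  move=> i y lim; rewrite /w'; case: (ltngtP i r) => [ir|ri|->].
  - by have -> : (i < r.+1)%N by lia.
  - by have -> : (i < r.+1)%N = false by lia.
  - rewrite ?eqxx ?ltnn ltnSn /=; case: eqP => [->|]; rewrite ?Srb //.
    by rewrite andbF.
suff -> : CS k n.+1 (fun i => if i == r then (fun y => (if (i < r.+1)%N then S i else pred1 (w i)) y && (id y == b))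
          else if (i < r.+1)%N then S i else pred1 (w i)) = set0 by rewrite !measure0.
apply/seteqP; split => x //= H.
have := H r rn; rewrite eqxx ltnSn /= => /andP[Sx /eqP xb].
by rewrite xb Srb in Sx.
Qed.

Lemma agree (A : set T) : measurable A -> rho1 A = rho2 A.
Proof.
move=> mA.
have GT : Rect setT.
  exists 0, 0%N, (fun _ _ => true); by apply/seteqP; split.
apply: (g_sigma_algebra_measure_unique Rect _ (fun _ => setT)) => //.
- by move=> _ [k [n [S ->]]]; exact: Cs_meas.
- by apply/seteqP; split => // x _; exists 0%N.
- exact: Rect_setI.
- by move=> _ [k [n [S ->]]]; exact: agree_rect.
- move: mA; apply: sub_sigma_algebra2 => _ [k [a ->]].
  exists k, 0%N, (fun i => if i == 0%N then pred1 a else predT).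
  apply/seteqP; split => x /=.
    move=> xa [|i] // _; by rewrite /= addr0 xa eqxx.
  by move=> H; have := H 0%N isT; rewrite /= addr0 => /eqP.
Qed.
End Uniq.



Definition Fm (R : realType) (V : finType) (P : V -> V -> R) (n : nat) (w : nat -> V) : R :=
  P (w 0%N) (w 1%N) * \prod_(1 <= i < n.+1) @mc_Q R V P (w i) (w i.+1).

Section Mk.
Variables (R : realType) (V : finType) (v0 : V) (E : rel V) (P : V -> V -> R).
Variable mu : probability (@pathsp V v0) R.
Hypothesis hst : @is_stationary_mc R V E P.
Hypothesis hmk : @is_markov_process R V v0 E P mu.
Local Notation T := (@pathsp V v0).

Lemma prob_fin (A : set T) : measurable A -> mu A = (fine (mu A))%:E.
Proof.
move=> mA; rewrite fineK // ge0_fin_numE ?measure_ge0 //.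
by apply: (le_lt_trans (probability_le1 _ mA)); rewrite ltry.
Qed.

Definition w2 (a b : V) : nat -> V := fun i => if i is 0%N then a else b.

Lemma pair0 k a b : ~~ E a b -> mu (@cyl V v0 k 1 (w2 a b)) = 0%E.
Proof.
case: hst => Pge0 Pedge Psum _ _.
have mC : forall a b, measurable (@cyl V v0 k 1 (w2 a b)).
  by move=> a' b'; rewrite Cs_cyl; exact: Cs_meas.
have h1 : mu setT = (\sum_a \sum_b mu (@cyl V v0 k 1 (w2 a b)))%E.
  rewrite (meas_split _ _ _ _ mu setT (fun x : T => x k)); last first.
    by move=> c; apply: measurableI => //; exact: (coord_pre_meas k _ id).
  apply: eq_bigr => a' _.
  rewrite (meas_split _ _ _ _ mu _ (fun x : T => x (k + 1))); last first.
    move=> c; apply: measurableI; last exact: (coord_pre_meas _ _ id).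
    by apply: measurableI => //; exact: (coord_pre_meas k _ id).
  apply: eq_bigr => b' _; congr (mu _); apply/seteqP; split => x /=.
    by case=> -[_ xa] xb [|[|i]] //= _; rewrite ?addr0 // xa.
  move=> H; split; [split=> //|].
    by have := H 0%N isT; rewrite addr0.
  by have := H 1%N isT.
pose r a b := fine (mu (@cyl V v0 k 1 (w2 a b))).
have hr : forall a b, mu (@cyl V v0 k 1 (w2 a b)) = (r a b)%:E.
  by move=> a' b'; rewrite -prob_fin.
have rge0 : forall a b, 0 <= r a b by move=> a' b'; apply: fine_ge0; exact: measure_ge0.
have hrP : forall a b, E a b -> r a b = P a b.
  move=> a' b' Eab; apply: EFin_inj; rewrite -hr hmk; last by case=> //.
  by rewrite big_geq // mulr1.
have sr : \sum_a \sum_b r a b = 1.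
  apply: EFin_inj; rewrite -(probability_setT mu) h1.
  rewrite -sumEFin; apply: eq_bigr => a' _; rewrite -sumEFin.
  by apply: eq_bigr => b' _; rewrite hr.
have sd : \sum_(p : V * V) (r p.1 p.2 - P p.1 p.2) = 0.
  rewrite -(pair_bigA _ (fun a b => r a b - P a b)) /=.
  under eq_bigr => a' _ do rewrite sumrB.
  by rewrite sumrB sr Psum subrr.
have tge0 : forall p : V * V, true -> 0 <= r p.1 p.2 - P p.1 p.2.
  move=> [a' b'] _ /=; case: (boolP (E a' b')) => Eab.
    by rewrite hrP // subrr.
  by rewrite Pedge // subr0.
move=> nE; have := psumr_eq0P tge0 sd isT (i:=(a, b)).
by rewrite /= Pedge // subr0 hr => ->.
Qed.

Lemma cyl_all k n w : mu (@cyl V v0 k n.+1 w) = (@Fm R V P n w)%:E.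
Proof.
case: (hst) => Pge0 Pedge Psum _ _.
case: (boolP [forall i : 'I_n.+1, E (w i) (w i.+1)]) => [/forallP H|].
  apply: hmk => i lei; have lt : (i < n.+1)%N by rewrite ltnS.
  exact: (H (Ordinal lt)).
move/forallPn => [[j lj] /= nE].
have Fm0 : @Fm R V P n w = 0.
  rewrite /Fm; case: j lj nE => [|j] lj nE; first by rewrite Pedge // mul0r.
  rewrite (big_rem j.+1) ?mem_index_iota //= /mc_Q (Pedge _ _ nE).
  by rewrite mul0r mul0r mulr0.
rewrite Fm0; apply/le_anti; rewrite measure_ge0 andbT.
apply: (@le_trans _ _ (mu (@cyl V v0 (k + j%:Z) 1 (w2 (w j) (w j.+1))))); last first.
  by rewrite (pair0 (k + j%:Z) _ _ nE).
apply: le_measure; rewrite ?inE.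
- by rewrite Cs_cyl; exact: Cs_meas.
- by rewrite Cs_cyl; exact: Cs_meas.
move=> x /= H [|[|i]] // _.
  by rewrite addr0; apply: H; lia.
have -> : k + j%:Z + 1%N%:Z = k + j.+1%:Z by lia.
by apply: H.
Qed.
End Mk.



Section PF.
Context (R : realType) (V1 V2 : finType) (a1 : V1) (a2 : V2).
Local Notation T := (@pathsp (V1 * V2)%type (a1, a2)).
Local Notation T1 := (@pathsp V1 a1).
Variable mu : {measure set T -> \bar R}.

Lemma marg1_meas : measurable_fun [set: T] (@marg1 V1 V2 a1 a2 : T -> T1).
Proof.
apply: (@measurability _ _ T T1 setT _ (@coord_events V1 a1)) => //.
move=> _ [B [k [a ->]] <-].
rewrite setTI.
have -> : (@marg1 V1 V2 a1 a2 : T -> T1) @^-1` [set x | x k = a] =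
          (fun x : T => fst (x k)) @^-1` [set a] by [].
exact: (coord_pre_meas k _ fst).
Qed.

Definition pfm := pushforward mu (@marg1 V1 V2 a1 a2 : T -> T1).

Let pfm0 : pfm set0 = 0%E.
Proof. by rewrite /pfm /pushforward preimage_set0 measure0. Qed.

Let pfm_ge0 A : (0 <= pfm A)%E.
Proof. rewrite /pfm /pushforward; exact: measure_ge0. Qed.

Let pfm_sigma_additive : semi_sigma_additive pfm.
Proof.
move=> F mF tF mUF; rewrite /pfm /pushforward preimage_bigcup.
apply: measure_semi_sigma_additive.
- by move=> n; rewrite -[X in measurable X]setTI; exact: marg1_meas.
- apply/trivIsetP => /= i j _ _ ij; rewrite -preimage_setI.
  by move/trivIsetP : tF => /(_ _ _ _ _ ij) ->//; rewrite preimage_set0.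
- by rewrite -preimage_bigcup -[X in measurable X]setTI; exact: marg1_meas.
Qed.

HB.instance Definition _ := isMeasure.Build _ _ _ pfm pfm0 pfm_ge0 pfm_sigma_additive.
End PF.

Section Main.
Variables (R : realType) (V1 V2 : finType) (a1 : V1) (a2 : V2)
  (E1 : rel V1) (E2 : rel V2)
  (P : (V1 * V2)%type -> (V1 * V2)%type -> R) (P1 : V1 -> V1 -> R)
  (mu : probability (@pathsp (V1 * V2)%type (a1, a2)) R) (nu : probability (@pathsp V1 a1) R).
Hypothesis hst : @is_stationary_mc R (V1 * V2)%type (@prod_rel V1 V2 E1 E2) P.
Hypothesis hst1 : @is_stationary_mc R V1 E1 P1.
Hypothesis hP1 : forall v v' : V1, E1 v v' ->
     P1 v v' = \sum_(u : V2) \sum_(u' : V2 | @prod_rel V1 V2 E1 E2 (v, u) (v', u'))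
                 P (v, u) (v', u').
Hypothesis hQ : forall (u0 : V2) (v0 v1 : V1),
     \sum_(u1 : V2) @mc_Q R (V1 * V2)%type P (v0, u0) (v1, u1) = @mc_Q R V1 P1 v0 v1.
Hypothesis hmk : @is_markov_process R (V1 * V2)%type (a1, a2) (@prod_rel V1 V2 E1 E2) P mu.
Hypothesis hmk1 : @is_markov_process R V1 a1 E1 P1 nu.

Local Notation V := (V1 * V2)%type.
Local Notation T := (@pathsp V (a1, a2)).
Local Notation T1 := (@pathsp V1 a1).
Local Notation Q := (@mc_Q R V P).
Local Notation Q1 := (@mc_Q R V1 P1).

Lemma P1_full v v' : P1 v v' = \sum_(u : V2) \sum_(u' : V2) P (v, u) (v', u').
Proof.
case: (hst) => _ Pedge _ _ _; case: (hst1) => _ P1edge _ _ _.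
case: (boolP (E1 v v')) => e.
  rewrite hP1 //; apply: eq_bigr => u _; rewrite big_mkcond; apply: eq_bigr => u' _.
  by case: ifP => // h; rewrite Pedge ?h.
rewrite P1edge // big1 // => u _; rewrite big1 // => u' _.
by rewrite Pedge // /prod_rel /= (negbTE e).
Qed.

Definition upd (u : nat -> V2) (j : nat) (b : V2) : nat -> V2 :=
  fun i => if i == j then b else u i.

Section Fixed.
Variables (k : int) (n : nat) (w : nat -> V1).

Definition Mx (j : nat) (u : nat -> V2) : set T :=
  @Cs V (a1, a2) k n.+1 (fun i => if (i < j)%N then (fun y : V => y == (w i, u i)) else (fun y : V => y.1 == w i)).

Lemma Mx_split j u b : (j <= n.+1)%N ->
  Mx j u `&` (fun x : T => snd (x (k + j%:Z))) @^-1` [set b] = Mx j.+1 (upd u j b).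
Proof.
move=> jn; rewrite /Mx (Cs_split k n.+1 _ j _ snd b jn); apply: Cs_ext => i [y1 y2] lim.
rewrite /upd; case: (ltngtP i j) => [ij|ji|->].
- by have -> : (i < j.+1)%N by lia.
- by have -> : (i < j.+1)%N = false by lia.
- by rewrite ?ltnn ?eqxx ltnSn /= xpair_eqE.
Qed.

Lemma Mx_meas_split j u :
  forall b, measurable (Mx j u `&` (fun x : T => snd (x (k + j%:Z))) @^-1` [set b]).
Proof. by move=> b; exact: (Cs_split_meas k n.+1 _ j _ snd). Qed.

Lemma Mx_claim s : forall t u, (t + s = n)%N ->
  mu (Mx t.+2 u) = (@Fm R V P t (fun i => (w i, u i)) * \prod_(t.+1 <= i < n.+1) Q1 (w i) (w i.+1))%:E.
Proof.
elim: s => [|s IH] t u ts.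
  have tn : t = n by lia.
  subst t; rewrite big_geq // mulr1 -(cyl_all _ _ _ _ _ _ hst hmk k).
  rewrite /Mx Cs_cyl; congr (mu _); apply: Cs_ext => i y lim.
  by have -> : (i < n.+2)%N by lia.
have tn : (t.+2 <= n.+1)%N by lia.
rewrite (meas_split _ _ _ _ mu _ (fun x : T => snd (x (k + t.+2%:Z)))); last exact: Mx_meas_split.
transitivity (\sum_(b : V2) (@Fm R V P t.+1 (fun i => (w i, upd u t.+2 b i)) *
     \prod_(t.+2 <= i < n.+1) Q1 (w i) (w i.+1))%:E)%E.
  by apply: eq_bigr => b _; rewrite (Mx_split _ _ _ tn); apply: (IH t.+1); lia.
have eF : forall b, @Fm R V P t.+1 (fun i => (w i, upd u t.+2 b i)) =
     @Fm R V P t (fun i => (w i, u i)) * Q (w t.+1, u t.+1) (w t.+2, b).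
  move=> b; rewrite /Fm big_nat_recr //= -mulrA /upd /=.
  have -> : (t.+1 == t.+2) = false by lia.
  rewrite eqxx; congr (_ * (_ * _)).
  apply: eq_big_nat => i /andP[_ lt].
  have -> : (i == t.+2) = false by lia.
  by have -> : (i.+1 == t.+2) = false by lia.
rewrite sumEFin; congr (_%:E).
rewrite (eq_bigr (fun b => @Fm R V P t (fun i => (w i, u i)) * Q (w t.+1, u t.+1) (w t.+2, b) *
   \prod_(t.+2 <= i < n.+1) Q1 (w i) (w i.+1))); last by move=> b _; rewrite eF.
rewrite -big_distrl /= -big_distrr /= hQ.
rewrite [in RHS]big_ltn; last by lia.
by rewrite mulrA.
Qed.

Lemma marg_cyl : @pfm R V1 V2 a1 a2 mu (@cyl V1 a1 k n.+1 w) = (@Fm R V1 P1 n w)%:E.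
Proof.
rewrite /pfm /pushforward.
have -> : (@marg1 V1 V2 a1 a2 : T -> T1) @^-1` (@cyl V1 a1 k n.+1 w) = Mx 0 (fun _ => a2).
  rewrite /Mx; apply/seteqP; split => x /= H i lim; first by apply/eqP; exact: H.
  by apply/eqP; exact: H.
rewrite (meas_split _ _ _ _ mu _ (fun x : T => snd (x (k + 0%N%:Z)))); last exact: Mx_meas_split.
transitivity (\sum_(b0 : V2) \sum_(b1 : V2) mu (Mx 2 (upd (upd (fun _ => a2) 0 b0) 1 b1)))%E.
  apply: eq_bigr => b0 _; rewrite (Mx_split _ _ _ (leq0n _)).
  rewrite (meas_split _ _ _ _ mu _ (fun x : T => snd (x (k + 1%N%:Z)))); last exact: Mx_meas_split.
  by apply: eq_bigr => b1 _; rewrite (Mx_split _ _ _ (ltn0Sn _)).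
transitivity (\sum_(b0 : V2) \sum_(b1 : V2)
   (P (w 0%N, b0) (w 1%N, b1) * \prod_(1 <= i < n.+1) Q1 (w i) (w i.+1))%:E)%E.
  apply: eq_bigr => b0 _; apply: eq_bigr => b1 _.
  by rewrite (Mx_claim n) ?add0n // /Fm big_geq // mulr1.
transitivity ((\sum_(b0 : V2) \sum_(b1 : V2)
   (P (w 0%N, b0) (w 1%N, b1) * \prod_(1 <= i < n.+1) Q1 (w i) (w i.+1)))%:E)%E.
  by rewrite -sumEFin; apply: eq_bigr => b0 _; rewrite -sumEFin.
congr (_%:E).
rewrite /Fm P1_full big_distrl /=; apply: eq_bigr => b0 _.
by rewrite big_distrl.
Qed.
End Fixed.

Theorem main_agree : forall A : set T1, measurable A -> @pfm R V1 V2 a1 a2 mu A = nu A.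
Proof.
apply: agree.
  change (mu ((@marg1 V1 V2 a1 a2 : T -> T1) @^-1` setT) < +oo)%E.
  by rewrite preimage_setT probability_setT ltry.
move=> k n w; apply: (eq_trans (marg_cyl k n w)); apply/esym; exact: (cyl_all _ _ _ _ _ _ hst1 hmk1).
Qed.
End Main.

Theorem lemma27 (R : realType) (V1 V2 : finType) (a1 : V1) (a2 : V2)
  (E1 : rel V1) (E2 : rel V2)
  (P : (V1 * V2)%type -> (V1 * V2)%type -> R) (P1 : V1 -> V1 -> R)
  (mu : probability (@pathsp (V1 * V2)%type (a1, a2)) R) (nu : probability (@pathsp V1 a1) R) :
  @is_stationary_mc R (V1 * V2)%type (@prod_rel V1 V2 E1 E2) P ->
  @is_stationary_mc R V1 E1 P1 ->
  (forall v v' : V1, E1 v v' ->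
     P1 v v' = \sum_(u : V2) \sum_(u' : V2 | @prod_rel V1 V2 E1 E2 (v, u) (v', u'))
                 P (v, u) (v', u')) ->
  (forall (u0 : V2) (v0 v1 : V1),
     \sum_(u1 : V2) @mc_Q R (V1 * V2)%type P (v0, u0) (v1, u1) = @mc_Q R V1 P1 v0 v1) ->
  @is_markov_process R (V1 * V2)%type (a1, a2) (@prod_rel V1 V2 E1 E2) P mu ->
  @is_markov_process R V1 a1 E1 P1 nu ->
  forall A : set (@pathsp V1 a1), measurable A ->
    pushforward mu (@marg1 V1 V2 a1 a2) A = nu A.
Proof.
move=> hst hst1 hP1 hQ hmk hmk1 A mA.
exact: (@main_agree R V1 V2 a1 a2 E1 E2 P P1 mu nu hst hst1 hP1 hQ hmk hmk1 A mA).
Qed.
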